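(* For integers $M\ge2$ and $\beta\in(0,1)$ let $C=\frac{1-\beta}{2M-1}$, $\mu_0=(M-1)C^{-1}$, $\sigma_0=\sqrt{\mu_0(C^{-1}-1)}$. Let $\hat Z_0=G+\min(N_1,N_2)$ where $G,N_1,N_2$ are independent, $G$ is geometric on $\{1,2,\dots\}$ with success probability $\beta$, and $N_1,N_2\sim\mathcal{N}(\mu_0,\sigma_0^2)$. Then $$\mathbb{E}[\hat Z_0]=\frac1\beta+\mu_0-\frac{\sigma_0}{\sqrt\pi}.$$ Moreover, if $\beta^*_M\in(0,1)$ denotes a minimizer of $\beta\mapsto\mathbb{E}[\hat Z_0]$ over $(0,1)$, then $M\beta^*_M\to\frac{\sqrt2}{2}$ as $M\to\infty$, i.e. $\beta^*_M\sim\frac{\sqrt2}{2M}$.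
   Context: This is the Gaussian approximation of the age of information at the node diametrically opposite the source in a ring of $2M$ nodes under the uniform Bernoulli policy: the source transmits its own information with probability $\beta$ and every other piece of information is transmitted with probability $C=(1-\beta)/(2M-1)$. *)

(* Defs.v *)
From Stdlib Require Import Reals.
Open Scope R_scope.

(* Parameters of the uniform Bernoulli policy on a ring of 2M nodes. *)
Definition Cpar (M : nat) (beta : R) : R := (1 - beta) / (2 * INR M - 1).
Definition mu0 (M : nat) (beta : R) : R := (INR M - 1) / Cpar M beta.
Definition sigma0 (M : nat) (beta : R) : R :=
  sqrt (mu0 M beta * (/ Cpar M beta - 1)).

Definition gauss_pdf (mu sigma x : R) : R :=
  exp (- (x - mu) ^ 2 / (2 * sigma ^ 2)) / (sigma * sqrt (2 * PI)).

(* P(G = k+1) for G geometric on {1,2,...} with success probability beta. *)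
Definition geom_pmf (beta : R) (k : nat) : R := beta * (1 - beta) ^ k.

Definition ImpInt (f : R -> R) (l : R) : Prop :=
  exists pr : forall a b, Riemann_integrable f a b,
    forall eps, eps > 0 -> exists A, forall a b,
      a <= - A -> A <= b -> Rabs (RiemannInt (pr a b) - l) < eps.

Definition DoubleImpInt (F : R -> R -> R) (v : R) : Prop :=
  exists g : R -> R, (forall x, ImpInt (F x) (g x)) /\ ImpInt g v.

(* E[ G + min(N1,N2) ] = L, where G ~ Geom(beta) on {1,2,...},
   N1, N2 ~ N(mu0, sigma0^2), all independent.  The expectation over the
   product space is written as a sum over G of (iterated) integrals
   against the product density. *)
Definition ExpZ0 (M : nat) (beta : R) (L : R) : Prop :=
  exists h : nat -> R,
    (forall k : nat,
       DoubleImpInt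
         (fun x y => (INR (S k) + Rmin x y)
                     * gauss_pdf (mu0 M beta) (sigma0 M beta) x
                     * gauss_pdf (mu0 M beta) (sigma0 M beta) y)
         (h k))
    /\ infinite_sum (fun k => geom_pmf beta k * h k) L.

(* Main.v *)
Require Import Defs.
From Stdlib Require Import Reals.
Open Scope R_scope.
From Stdlib Require Import Lra Lia Psatz ZArith.
From Coquelicot Require Import Coquelicot.
Open Scope R_scope.

Definition gf (t : R) : R := exp (- t ^ 2).
Definition Eg (x : R) : R := RInt gf 0 x.

Lemma gf_cont x : continuous gf x.
Proof. apply (ex_derive_continuous (V:=R_NormedModule)). unfold gf. auto_derive. easy. Qed.

Lemma gf_exRInt a b : ex_RInt gf a b.
Proof. apply (ex_RInt_continuous (V:=R_CompleteNormedModule)). intros; apply gf_cont. Qed.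

Lemma Eg_derive x : is_derive Eg x (gf x).
Proof.
  apply (is_derive_RInt gf Eg 0 x).
  - apply filter_forall. intros y. apply (RInt_correct (V:=R_CompleteNormedModule)), gf_exRInt.
  - apply gf_cont.
Qed.

Definition uu (x t : R) : R := exp (- x ^ 2 * (1 + t ^ 2)) / (1 + t ^ 2).
Definition Iu (x : R) : R := RInt (fun t => uu x t) 0 1.

Lemma pos1t t : 0 < 1 + t ^ 2.
Proof. nra. Qed.

Lemma uu_dx x t : is_derive (fun z => uu z t) x (- 2 * x * exp (- x ^ 2 * (1 + t ^ 2))).
Proof.
  unfold uu. auto_derive. - generalize (pos1t t); lra.
  - replace (- (x * (x * 1)) * (1 + t * (t * 1))) with (- x ^ 2 * (1 + t ^ 2)) by ring. field. generalize (pos1t t); lra.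
Qed.

Lemma cont2_aux x t :
  continuity_2d_pt (fun u v => - 2 * u * exp (- u ^ 2 * (1 + v ^ 2))) x t.
Proof.
  apply continuity_2d_pt_mult.
  - apply continuity_2d_pt_mult. apply continuity_2d_pt_const. apply continuity_2d_pt_id1.
  - apply continuity_2d_pt_filterlim.
    eapply filterlim_comp with (f := fun z : R * R => - (fst z) ^ 2 * (1 + (snd z) ^ 2))
      (g := exp).
    + apply (continuity_2d_pt_filterlim (fun u v => - u ^ 2 * (1 + v ^ 2))).
      apply continuity_2d_pt_mult.
      * apply continuity_2d_pt_opp. simpl. apply continuity_2d_pt_mult.
        apply continuity_2d_pt_id1.
        apply continuity_2d_pt_mult. apply continuity_2d_pt_id1. apply continuity_2d_pt_const.
      * apply continuity_2d_pt_plus. apply continuity_2d_pt_const. simpl.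
        apply continuity_2d_pt_mult. apply continuity_2d_pt_id2.
        apply continuity_2d_pt_mult. apply continuity_2d_pt_id2. apply continuity_2d_pt_const.
    + apply (ex_derive_continuous (V:=R_NormedModule)). auto_derive. easy.
Qed.

Lemma uu_cont x t : continuous (fun t => uu x t) t.
Proof. apply (ex_derive_continuous (V:=R_NormedModule)). unfold uu. auto_derive. generalize (pos1t t); lra. Qed.

Lemma Iu_derive x : is_derive Iu x (- 2 * gf x * Eg x).
Proof.
  assert (H := is_derive_RInt_param uu 0 1 x).
  unfold Iu.
  replace (- 2 * gf x * Eg x) with
    (RInt (fun t : R => Derive (fun u : R => uu u t) x) 0 1).
  apply H.
  - apply filter_forall. intros y t _. eexists. apply uu_dx.
  - intros t _. eapply continuity_2d_pt_ext. 2: apply (cont2_aux x t).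
    intros u v. simpl. symmetry. apply is_derive_unique. apply uu_dx.
  - apply filter_forall. intros y. apply (ex_RInt_continuous (V:=R_CompleteNormedModule)).
    intros; apply uu_cont.
  - rewrite (RInt_ext _ (fun t => scal (-2 * gf x) (scal x (gf (x * t + 0))))).
    2: { intros t _. replace (Derive (fun u : R => uu u t) x) with (- 2 * x * exp (- x ^ 2 * (1 + t ^ 2))).
         2: { symmetry. apply is_derive_unique, uu_dx. } unfold gf, scal; simpl.
         unfold mult; simpl.
         assert (E: exp (- (x*(x*1))) * exp (- ((x*t+0)*((x*t+0)*1))) = exp (- (x*(x*1))*(1+t*(t*1)))).
         { rewrite <- exp_plus. f_equal. ring. } rewrite <- E. ring. }
    rewrite (@RInt_scal R_CompleteNormedModule).
    rewrite (@RInt_comp_lin R_CompleteNormedModule). unfold Eg, scal; simpl. unfold mult; simpl. f_equal. f_equal; ring.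
    apply gf_exRInt.
    apply (ex_RInt_continuous (V:=R_CompleteNormedModule)). intros.
    apply (ex_derive_continuous (V:=R_NormedModule)). unfold gf, scal; simpl; unfold mult; simpl. auto_derive. easy.
Qed.

Definition hh (x : R) := Eg x ^ 2 + Iu x.

Lemma hh_derive x : is_derive hh x 0.
Proof.
  unfold hh. replace 0 with (INR 2 * gf x * Eg x ^ Init.Nat.pred 2 + (- 2 * gf x * Eg x)) by (simpl; ring).
  apply (is_derive_plus (K:=R_AbsRing) (V:=R_NormedModule)).
  - apply (is_derive_pow (fun y => Eg y) 2 x (gf x)). apply Eg_derive.
  - apply Iu_derive.
Qed.

Lemma atan_derive x : is_derive atan x (/ (1 + x ^ 2)).
Proof. apply is_derive_Reals, derivable_pt_lim_atan. Qed.

Lemma hh0 : hh 0 = PI / 4.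
Proof.
  unfold hh, Eg, Iu. rewrite RInt_point. unfold zero; simpl.
  assert (H : is_RInt (fun t => uu 0 t) 0 1 (minus (atan 1) (atan 0))).
  { apply (is_RInt_derive (V:=R_CompleteNormedModule)).
    - intros t _. unfold uu. replace (exp (- 0 ^ 2 * (1 + t ^ 2)) / (1 + t ^ 2)) with (/ (1 + t^2)).
      apply atan_derive. replace (- 0 ^ 2 * (1 + t ^ 2)) with 0 by ring. rewrite exp_0. field.
      generalize (pos1t t); lra.
    - intros t _. apply uu_cont. }
  rewrite (is_RInt_unique _ _ _ _ H). rewrite atan_1, atan_0. unfold minus, plus, opp; simpl. ring.
Qed.

Lemma hh_const x : hh x = PI / 4.
Proof.
  rewrite <- hh0.
  assert (H : is_RInt (fun _ => 0) 0 x (minus (hh x) (hh 0))).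
  { apply (is_RInt_derive (V:=R_CompleteNormedModule)).
    - intros; apply hh_derive.
    - intros; apply continuous_const. }
  assert (H2 := is_RInt_const 0 x 0).
  assert (E := is_RInt_unique _ _ _ _ H).
  rewrite (is_RInt_unique _ _ _ _ H2) in E.
  unfold minus, plus, opp, scal in E; simpl in E. unfold mult in E; simpl in E. lra.
Qed.

Definition LP (G : R -> R) (L : R) : Prop :=
  forall eps, 0 < eps -> exists A, forall b, A <= b -> Rabs (G b - L) < eps.
Definition LM (G : R -> R) (L : R) : Prop :=
  forall eps, 0 < eps -> exists A, forall a, a <= A -> Rabs (G a - L) < eps.

Lemma exp_mono x y : x <= y -> exp x <= exp y.
Proof. intros H; destruct (Rle_lt_or_eq_dec _ _ H) as [H1|H1]. apply Rlt_le, exp_increasing, H1. subst; lra. Qed.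

Lemma gf_bound x : 0 < gf x <= / (1 + x ^ 2).
Proof.
  unfold gf. split. apply exp_pos.
  assert (H := exp_ineq1_le (x ^ 2)).
  replace (exp (- x ^ 2)) with (/ exp (x ^ 2)).
  apply Rinv_le_contravar. nra. lra.
  rewrite exp_Ropp. reflexivity.
Qed.

Lemma Iu_bound x : 0 <= Iu x <= gf x.
Proof.
  unfold Iu. split.
  - apply RInt_ge_0. lra. apply (ex_RInt_continuous (V:=R_CompleteNormedModule)); intros; apply uu_cont.
    intros t _. unfold uu. apply Rle_mult_inv_pos. apply Rlt_le, exp_pos. apply pos1t.
  - replace (gf x) with (RInt (fun _ => gf x) 0 1).
    apply RInt_le. lra. apply (ex_RInt_continuous (V:=R_CompleteNormedModule)); intros; apply uu_cont.
    apply ex_RInt_const.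
    intros t Ht. unfold uu, gf. unfold Rdiv.
    assert (exp (- x ^ 2 * (1 + t ^ 2)) <= exp (- x ^ 2)).
    { apply exp_mono. nra. }
    assert (0 < / (1 + t^2) <= 1). { split. apply Rinv_0_lt_compat, pos1t.
      rewrite <- Rinv_1. apply Rinv_le_contravar. lra. nra. }
    assert (0 < exp (- x ^ 2 * (1 + t ^ 2))) by apply exp_pos. nra.
    rewrite RInt_const. unfold scal; simpl; unfold mult; simpl. ring.
Qed.

Lemma Eg_ge0 x : 0 <= x -> 0 <= Eg x.
Proof. intros; unfold Eg. apply RInt_ge_0; auto. apply gf_exRInt. intros; left; apply gf_bound. Qed.

Lemma Eg_odd x : Eg (- x) = - Eg x.
Proof.
  unfold Eg.
  assert (H := @RInt_comp_lin R_CompleteNormedModule gf (-1) 0 0 x).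
  replace (-1 * 0 + 0) with 0 in H by ring. replace (-1 * x + 0) with (- x) in H by ring.
  rewrite <- H by apply gf_exRInt.
  rewrite (@RInt_scal R_CompleteNormedModule).
  rewrite (RInt_ext _ gf). unfold scal; simpl; unfold mult; simpl. ring.
  intros t _. unfold gf. f_equal. ring.
  apply (ex_RInt_continuous (V:=R_CompleteNormedModule)); intros.
  apply (ex_derive_continuous (V:=R_NormedModule)). unfold gf. auto_derive. easy.
Qed.

Definition sq2 := sqrt PI / 2.

Lemma sq2_pos : 0 < sq2.
Proof. unfold sq2. generalize (sqrt_lt_R0 PI PI_RGT_0). lra. Qed.

Lemma sq2_sq : sq2 ^ 2 = PI / 4.
Proof. unfold sq2. replace ((sqrt PI / 2) ^ 2) with (sqrt PI * sqrt PI / 4) by field.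
  rewrite sqrt_sqrt. reflexivity. generalize PI_RGT_0; lra. Qed.

Lemma Eg_LP : LP Eg sq2.
Proof.
  intros eps Heps. exists (2 / (sq2 * eps) + 1). intros b Hb.
  assert (Hs := sq2_pos).
  assert (H0 : 0 < 2 / (sq2 * eps)). { apply Rdiv_lt_0_compat. lra. nra. }
  assert (Hb0 : 0 <= b) by lra.
  assert (HE := Eg_ge0 b Hb0).
  assert (Hh := hh_const b). unfold hh in Hh.
  assert (HI := Iu_bound b). assert (Hg := gf_bound b).
  rewrite <- sq2_sq in Hh.
  assert (Heq : Eg b - sq2 = - Iu b / (Eg b + sq2)). { field_simplify_eq. nra. lra. }
  rewrite Heq. rewrite Rabs_div by lra. rewrite Rabs_Ropp. rewrite (Rabs_right (Eg b + sq2)) by lra.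
  rewrite Rabs_right by lra.
  apply (Rle_lt_trans _ (Iu b / sq2)).
  { unfold Rdiv. apply Rmult_le_compat_l. lra. apply Rinv_le_contravar; lra. }
  assert (Iu b <= / b). { apply (Rle_trans _ (/ (1 + b^2))). lra. apply Rinv_le_contravar; nra. }
  apply (Rle_lt_trans _ (/ b / sq2)). { unfold Rdiv. apply Rmult_le_compat_r. left; apply Rinv_0_lt_compat; lra. lra. }
  assert (2 / (sq2 * eps) < b) by lra.
  replace (/ b / sq2) with (/ (sq2 * b)) by (field; lra).
  apply (Rmult_lt_reg_l (sq2 * b)). nra. rewrite Rinv_r by nra.
  apply (Rmult_lt_compat_l (sq2 * eps)) in H1; [|nra].
  replace (sq2*eps*(2/(sq2*eps))) with 2 in H1 by (field; lra). nra.
Qed.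

Lemma Eg_LM : LM Eg (- sq2).
Proof.
  intros eps Heps. destruct (Eg_LP eps Heps) as [A HA]. exists (- A). intros a Ha.
  replace a with (- (- a)) by ring. rewrite Eg_odd.
  replace (- Eg (- a) - - sq2) with (- (Eg (- a) - sq2)) by ring. rewrite Rabs_Ropp. apply HA. lra.
Qed.

Lemma RInt_anti (G g : R -> R) a b :
  (forall x, is_derive G x (g x)) -> (forall x, continuous g x) -> RInt g a b = G b - G a.
Proof.
  intros HG Hg. apply is_RInt_unique. apply (is_RInt_derive (V:=R_CompleteNormedModule)).
  intros; apply HG. intros; apply Hg.
Qed.

Lemma ImpInt_anti (f : R -> R) (x0 : R) (G1 G2 f1 f2 : R -> R) L1 L2 :
  (forall x, continuous f x) ->
  (forall x, is_derive G1 x (f1 x)) -> (forall x, continuous f1 x) -> (forall x, x <= x0 -> f1 x = f x) ->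
  (forall x, is_derive G2 x (f2 x)) -> (forall x, continuous f2 x) -> (forall x, x0 <= x -> f2 x = f x) ->
  LM G1 L1 -> LP G2 L2 ->
  ImpInt f (L2 - G2 x0 + G1 x0 - L1).
Proof.
  intros Hf HG1 Hf1 E1 HG2 Hf2 E2 HL1 HL2.
  assert (Hex : forall a b, ex_RInt f a b).
  { intros. apply (ex_RInt_continuous (V:=R_CompleteNormedModule)). intros; apply Hf. }
  exists (fun a b => ex_RInt_Reals_0 f a b (Hex a b)).
  intros eps Heps.
  destruct (HL1 (eps/2)) as [A1 HA1]. lra.
  destruct (HL2 (eps/2)) as [A2 HA2]. lra.
  exists (Rmax (Rabs A1) (Rmax (Rabs A2) (Rabs x0))). intros a b Ha Hb.
  assert (Hm1 := Rmax_l (Rabs A1) (Rmax (Rabs A2) (Rabs x0))).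
  assert (Hm2 := Rmax_r (Rabs A1) (Rmax (Rabs A2) (Rabs x0))).
  assert (Hm3 := Rmax_l (Rabs A2) (Rabs x0)).
  assert (Hm4 := Rmax_r (Rabs A2) (Rabs x0)).
  assert (R1 := Rle_abs A1). assert (R2 := Rle_abs A2). assert (R3 := Rle_abs x0).
  assert (R1' := Rle_abs (-A1)). assert (R3' := Rle_abs (-x0)).
  rewrite Rabs_Ropp in R1', R3'.
  rewrite <- RInt_Reals.
  rewrite <- (RInt_Chasles f a x0 b) by apply Hex.
  rewrite (RInt_ext f f1 a x0).
  rewrite (RInt_ext f f2 x0 b).
  rewrite (RInt_anti G1 f1) by auto. rewrite (RInt_anti G2 f2) by auto.
  unfold plus; simpl.
  assert (h1 := HA1 a ltac:(lra)). assert (h2 := HA2 b ltac:(lra)).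
  replace (G1 x0 - G1 a + (G2 b - G2 x0) - (L2 - G2 x0 + G1 x0 - L1)) with
    ((G2 b - L2) - (G1 a - L1)) by ring.
  apply (Rle_lt_trans _ _ _ (Rabs_triang _ _)). rewrite Rabs_Ropp. lra.
  - intros x Hx. symmetry. apply E2. rewrite Rmin_left in Hx by lra. lra.
  - intros x Hx. symmetry. apply E1. rewrite Rmax_right in Hx by lra. lra.
Qed.

Lemma LP_lim G L : LP G L <-> is_lim G p_infty L.
Proof.
  rewrite <- is_lim_spec. split.
  - intros H eps. destruct (H eps (cond_pos eps)) as [A HA]. exists A. intros; apply HA; lra.
  - intros H eps Heps. destruct (H (mkposreal eps Heps)) as [A HA]. exists (A + 1). intros; apply HA; lra.
Qed.

Lemma LM_lim G L : LM G L <-> is_lim G m_infty L.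
Proof.
  rewrite <- is_lim_spec. split.
  - intros H eps. destruct (H eps (cond_pos eps)) as [A HA]. exists A. intros; apply HA; lra.
  - intros H eps Heps. destruct (H (mkposreal eps Heps)) as [A HA]. exists (A - 1). intros; apply HA; lra.
Qed.

Lemma LP_comp G L a c : 0 < c -> LP G L -> LP (fun x => G ((x - a) / c)) L.
Proof.
  intros Hc H eps Heps. destruct (H eps Heps) as [A HA]. exists (c * A + a). intros b Hb.
  apply HA. apply (Rmult_le_reg_l c); auto. unfold Rdiv. 
  replace (c * ((b - a) * / c)) with (b - a) by (field; lra). lra.
Qed.

Lemma LM_comp G L a c : 0 < c -> LM G L -> LM (fun x => G ((x - a) / c)) L.
Proof.
  intros Hc H eps Heps. destruct (H eps Heps) as [A HA]. exists (c * A + a). intros b Hb.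
  apply HA. apply (Rmult_le_reg_l c); auto. unfold Rdiv. 
  replace (c * ((b - a) * / c)) with (b - a) by (field; lra). lra.
Qed.

Lemma LP_plus F G L K : LP F L -> LP G K -> LP (fun x => F x + G x) (L + K).
Proof. rewrite !LP_lim. intros. eapply is_lim_plus; eauto. reflexivity. Qed.
Lemma LM_plus F G L K : LM F L -> LM G K -> LM (fun x => F x + G x) (L + K).
Proof. rewrite !LM_lim. intros. eapply is_lim_plus; eauto. reflexivity. Qed.
Lemma LP_mult F G L K : LP F L -> LP G K -> LP (fun x => F x * G x) (L * K).
Proof. rewrite !LP_lim. intros. apply (is_lim_mult F G p_infty L K); auto. exact I. Qed.
Lemma LM_mult F G L K : LM F L -> LM G K -> LM (fun x => F x * G x) (L * K).
Proof. rewrite !LM_lim. intros. apply (is_lim_mult F G m_infty L K); auto. exact I. Qed.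
Lemma LP_const c : LP (fun _ => c) c.
Proof. intros e He; exists 0; intros; rewrite Rminus_diag, Rabs_R0; lra. Qed.
Lemma LM_const c : LM (fun _ => c) c.
Proof. intros e He; exists 0; intros; rewrite Rminus_diag, Rabs_R0; lra. Qed.
Lemma LP_ext F G L : (forall x, F x = G x) -> LP F L -> LP G L.
Proof. intros E H e He. destruct (H e He) as [A HA]. exists A; intros; rewrite <- E; auto. Qed.
Lemma LM_ext F G L : (forall x, F x = G x) -> LM F L -> LM G L.
Proof. intros E H e He. destruct (H e He) as [A HA]. exists A; intros; rewrite <- E; auto. Qed.

Lemma gf_LP : LP gf 0.
Proof.
  intros eps Heps. exists (/ eps). intros b Hb.
  assert (Hg := gf_bound b). rewrite Rminus_0_r, Rabs_right by lra.
  apply (Rle_lt_trans _ (/ (1 + b^2))). lra.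
  assert (0 < /eps) by (apply Rinv_0_lt_compat; lra).
  rewrite <- (Rinv_inv eps). apply Rinv_lt_contravar. apply Rmult_lt_0_compat; [lra|nra]. nra.
Qed.

Lemma gf_even x : gf (- x) = gf x.
Proof. unfold gf. f_equal. ring. Qed.

Lemma gf_LM : LM gf 0.
Proof.
  intros eps Heps. destruct (gf_LP eps Heps) as [A HA]. exists (- A). intros a Ha.
  rewrite <- gf_even. apply HA. lra.
Qed.

Lemma Derive_Eg x : Derive Eg x = gf x.
Proof. apply is_derive_unique, Eg_derive. Qed.
Lemma ex_derive_Eg x : ex_derive Eg x.
Proof. eexists; apply Eg_derive. Qed.


Ltac fixEg := change (fun x0 : R => Eg x0) with Eg in *; rewrite ?Derive_Eg.

Section Normal.
Variables mu s : R.
Hypothesis Hs : 0 < s.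

Definition cc := s * sqrt 2.
Lemma cc_pos : 0 < cc.
Proof. unfold cc. apply Rmult_lt_0_compat; auto. apply sqrt_lt_R0; lra. Qed.
Lemma sPI_pos : 0 < sqrt PI.
Proof. apply sqrt_lt_R0, PI_RGT_0. Qed.

Definition pdf x := gauss_pdf mu s x.

Lemma pdf_eq x : pdf x = gf ((x - mu) / cc) / (cc * sqrt PI).
Proof.
  unfold pdf, gauss_pdf, gf, cc. rewrite sqrt_mult by (generalize PI_RGT_0; lra).
  assert (H2 : 0 < sqrt 2) by (apply sqrt_lt_R0; lra).
  assert (H3 := sPI_pos).
  assert (E2 : sqrt 2 ^ 2 = 2). { simpl. rewrite Rmult_1_r. apply sqrt_sqrt. lra. }
  f_equal. f_equal. field_simplify_eq. rewrite E2. ring. split; lra.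
  rewrite Rmult_assoc. reflexivity.
Qed.

Lemma pdf_pos x : 0 < pdf x.
Proof. rewrite pdf_eq. apply Rdiv_lt_0_compat. apply gf_bound. apply Rmult_lt_0_compat. apply cc_pos. apply sPI_pos. Qed.

Lemma pdf_derive x : is_derive pdf x (- (x - mu) / s ^ 2 * pdf x).
Proof.
  unfold pdf, gauss_pdf. auto_derive.
  - easy.
  - assert (0 < sqrt (2 * PI)) by (apply sqrt_lt_R0; generalize PI_RGT_0; lra).
    replace (- (x - mu) ^ 2 / (2 * s ^ 2)) with (- ((x + - mu) * ((x + - mu) * 1)) * / (2 * (s * (s * 1)))) by (field; lra).
    field. lra.
Qed.

Lemma pdf_cont x : continuous pdf x.
Proof. apply (ex_derive_continuous (V:=R_NormedModule)). eexists; apply pdf_derive. Qed.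

Definition Phi x := / 2 + / sqrt PI * Eg ((x - mu) / cc).

Lemma Phi_derive x : is_derive Phi x (pdf x).
Proof.
  unfold Phi. assert (Hc := cc_pos). assert (Hp := sPI_pos). auto_derive.
  - apply ex_derive_Eg.
  - fixEg. rewrite pdf_eq. unfold Rdiv, Rminus. field. lra.
Qed.

Lemma Phi_LP : LP Phi 1.
Proof.
  replace 1 with (/ 2 + / sqrt PI * sq2).
  apply LP_plus. apply LP_const. apply LP_mult. apply LP_const. apply LP_comp. apply cc_pos. apply Eg_LP.
  unfold sq2. assert (Hp := sPI_pos). field. lra.
Qed.

Lemma Phi_LM : LM Phi 0.
Proof.
  replace 0 with (/ 2 + / sqrt PI * (- sq2)).
  apply LM_plus. apply LM_const. apply LM_mult. apply LM_const. apply LM_comp. apply cc_pos. apply Eg_LM.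
  unfold sq2. assert (Hp := sPI_pos). field. lra.
Qed.

Lemma pdf_LP : LP pdf 0.
Proof.
  apply (LP_ext (fun x => gf ((x - mu) / cc) * / (cc * sqrt PI))).
  intros; rewrite pdf_eq; reflexivity.
  replace 0 with (0 * / (cc * sqrt PI)) by ring.
  apply LP_mult. apply LP_comp. apply cc_pos. apply gf_LP. apply LP_const.
Qed.

Lemma pdf_LM : LM pdf 0.
Proof.
  apply (LM_ext (fun x => gf ((x - mu) / cc) * / (cc * sqrt PI))).
  intros; rewrite pdf_eq; reflexivity.
  replace 0 with (0 * / (cc * sqrt PI)) by ring.
  apply LM_mult. apply LM_comp. apply cc_pos. apply gf_LM. apply LM_const.
Qed.

Definition Psi x := / (2 * s * PI) * Eg ((x - mu) / s).

Lemma Psi_derive x : is_derive Psi x (pdf x ^ 2).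
Proof.
  unfold Psi. assert (Hp := sPI_pos). assert (HP := PI_RGT_0). auto_derive.
  - apply ex_derive_Eg.
  - fixEg. rewrite pdf_eq. unfold gf.
    assert (Hc := cc_pos).
    assert (E2 : cc ^ 2 = 2 * s ^ 2). { unfold cc. replace ((s*sqrt 2)^2) with (s^2 * (sqrt 2 * sqrt 2)) by ring. rewrite sqrt_sqrt; lra. }
    assert (Ep : sqrt PI ^ 2 = PI). { replace (sqrt PI ^2) with (sqrt PI * sqrt PI) by ring. rewrite sqrt_sqrt; lra. }
    replace ((exp (- ((x - mu) / cc) ^ 2) / (cc * sqrt PI)) ^ 2) with
      (exp (- ((x - mu) / cc) ^ 2) ^ 2 / (cc ^ 2 * sqrt PI ^ 2)) by (field; lra).
    rewrite E2, Ep.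
    assert (Eu : - ((x - mu) / cc) ^ 2 + - ((x - mu) / cc) ^ 2 = - ((x + - mu) * / s) ^ 2).
    { replace (- ((x - mu) / cc) ^ 2 + - ((x - mu) / cc) ^ 2) with (- 2 * (x-mu)^2 / cc^2) by (field; lra).
      rewrite E2. field. lra. }
    replace (exp (- ((x - mu) / cc) ^ 2) ^ 2) with (exp (- ((x - mu) / cc) ^ 2) * exp (- ((x - mu) / cc) ^ 2)) by ring.
    rewrite <- exp_plus, Eu. field. lra.
Qed.

Lemma Psi_LP : LP Psi (/ (2 * s * PI) * sq2).
Proof. apply LP_mult. apply LP_const. apply LP_comp; auto. apply Eg_LP. Qed.
Lemma Psi_LM : LM Psi (/ (2 * s * PI) * - sq2).
Proof. apply LM_mult. apply LM_const. apply LM_comp; auto. apply Eg_LM. Qed.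

Lemma Phi_cont x : continuous Phi x.
Proof. apply (ex_derive_continuous (V:=R_NormedModule)). eexists; apply Phi_derive. Qed.
Lemma Psi_cont x : continuous Psi x.
Proof. apply (ex_derive_continuous (V:=R_NormedModule)). eexists; apply Psi_derive. Qed.

End Normal.

Section Integ.
Variables mu s K : R.
Hypothesis Hs : 0 < s.

Local Notation pdf := (pdf mu s).
Local Notation Phi := (Phi mu s).
Local Notation Psi := (Psi mu s).

Lemma Derive_pdf x : Derive pdf x = - (x - mu) / s ^ 2 * pdf x.
Proof. apply is_derive_unique, pdf_derive; auto. Qed.
Lemma Derive_Phi x : Derive Phi x = pdf x.
Proof. apply is_derive_unique, Phi_derive; auto. Qed.
Lemma Derive_Psi x : Derive Psi x = pdf x ^ 2.
Proof. apply is_derive_unique, Psi_derive; auto. Qed.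

Lemma ex_pdf y : ex_derive (fun x => pdf x) y.
Proof. eexists; apply pdf_derive; auto. Qed.
Lemma ex_Phi y : ex_derive (fun x => Phi x) y.
Proof. eexists; apply Phi_derive; auto. Qed.
Lemma ex_Psi y : ex_derive (fun x => Psi x) y.
Proof. eexists; apply Psi_derive; auto. Qed.

Ltac solve_ex := match goal with
  | |- ex_derive ?f _ => lazymatch f with
      | context [Phi] => apply ex_Phi
      | context [Psi] => apply ex_Psi
      | context [pdf] => apply ex_pdf end
  | |- True => exact I
  | |- _ /\ _ => split; solve_ex
  end.
Ltac fixD :=
  change (fun x0 : R => pdf x0) with pdf in *;
  change (fun x0 : R => Phi x0) with Phi in *;
  change (fun x0 : R => Psi x0) with Psi in *;
  rewrite ?Derive_pdf, ?Derive_Phi, ?Derive_Psi.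

Lemma LP_val G L L' : LP G L -> L = L' -> LP G L'.
Proof. intros; subst; auto. Qed.
Lemma LM_val G L L' : LM G L -> L = L' -> LM G L'.
Proof. intros; subst; auto. Qed.

Lemma LM_opp F L : LM F L -> LM (fun x => - F x) (- L).
Proof. intros H. apply (LM_ext (fun x => -1 * F x)). intros; ring.
  apply LM_val with (-1 * L). apply LM_mult; auto. apply LM_const. ring. Qed.
Lemma LP_opp F L : LP F L -> LP (fun x => - F x) (- L).
Proof. intros H. apply (LP_ext (fun x => -1 * F x)). intros; ring.
  apply LP_val with (-1 * L). apply LP_mult; auto. apply LP_const. ring. Qed.

Lemma Rmin_abs a b : Rmin a b = (a + b - Rabs (a - b)) / 2.
Proof. unfold Rmin. destruct (Rle_dec a b). rewrite Rabs_left1 by lra. field.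
  rewrite Rabs_right by lra. field. Qed.

Ltac cont_tac := apply (ex_derive_continuous (V:=R_NormedModule)); auto_derive; solve_ex.

Lemma cont_of_der (G g : R -> R) : (forall x, is_derive G x (g x)) -> forall x, continuous G x.
Proof. intros H x. apply (ex_derive_continuous (V:=R_NormedModule)). eexists; apply H. Qed.

Lemma inner x : ImpInt (fun y => (K + Rmin x y) * pdf x * pdf y)
   (pdf x * ((K + x) + (mu - x) * Phi x - s^2 * pdf x)).
Proof.
  assert (H := ImpInt_anti (fun y => (K + Rmin x y) * pdf x * pdf y) x
    (fun y => pdf x * ((K + mu) * Phi y - s^2 * pdf y))
    (fun y => pdf x * (K + x) * Phi y)
    (fun y => (K + y) * pdf x * pdf y)
    (fun y => (K + x) * pdf x * pdf y) 0 (pdf x * (K + x))).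
  match type of H with _ -> _ -> _ -> _ -> _ -> _ -> _ -> _ -> _ -> ImpInt _ ?v =>
    replace (pdf x * ((K + x) + (mu - x) * Phi x - s^2 * pdf x)) with v by ring end.
  apply H; clear H.
  - intros y. apply (continuous_ext (fun y => (K + (x + y - Rabs (x - y)) / 2) * pdf x * pdf y)).
    intros; rewrite Rmin_abs; reflexivity.
    apply (continuous_mult (K:=R_AbsRing)). apply (continuous_mult (K:=R_AbsRing)).
    apply (continuous_plus (V:=R_NormedModule)). apply continuous_const.
    apply (continuous_ext (fun y => (x + y - Rabs (x - y)) * / 2)). reflexivity.
    apply (continuous_mult (K:=R_AbsRing)). 2: apply continuous_const.
    apply (continuous_minus (V:=R_NormedModule)).
    apply (continuous_plus (V:=R_NormedModule)). apply continuous_const. apply continuous_id.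
    apply continuous_Rabs_comp.
    apply (continuous_minus (V:=R_NormedModule)). apply continuous_const. apply continuous_id.
    apply continuous_const. apply pdf_cont; auto.
  - intros y. auto_derive. solve_ex. fixD. field. lra.
  - intros y. cont_tac.
  - intros y Hy. rewrite Rmin_right by lra. reflexivity.
  - intros y. auto_derive. solve_ex. fixD. ring.
  - intros y. cont_tac.
  - intros y Hy. rewrite Rmin_left by lra. reflexivity.
  - replace 0 with (pdf x * ((K + mu) * 0 - s ^ 2 * 0)) by ring.
    apply LM_mult. apply LM_const. apply LM_plus. apply LM_mult. apply LM_const. apply Phi_LM; auto.
    apply LM_opp. apply LM_mult. apply LM_const. apply pdf_LM; auto.
  - apply LP_val with (pdf x * (K + x) * 1); [|ring].
    apply LP_mult. apply LP_const. apply Phi_LP; auto.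
Qed.

Ltac limP := first
  [ apply Phi_LP; auto | apply pdf_LP; auto | apply Psi_LP; auto | apply LP_const
  | eapply LP_plus; [limP | limP] | eapply LP_opp; limP | eapply LP_mult; [limP|limP]
  | eapply LP_ext; [intro; unfold Rminus; reflexivity | eapply LP_plus; [limP|eapply LP_opp; limP]] ].
Ltac limM := first
  [ apply Phi_LM; auto | apply pdf_LM; auto | apply Psi_LM; auto | apply LM_const
  | eapply LM_plus; [limM | limM] | eapply LM_opp; limM | eapply LM_mult; [limM|limM]
  | eapply LM_ext; [intro; unfold Rminus; reflexivity | eapply LM_plus; [limM|eapply LM_opp; limM]] ].

Definition Gout x := K * Phi x + mu * Phi x + - (s^2 * pdf x) + s^2 * pdf x * Phi x + - (2 * s^2 * Psi x).

Lemma outer : ImpInt (fun x => pdf x * ((K + x) + (mu - x) * Phi x - s^2 * pdf x)) (K + mu - s / sqrt PI).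
Proof.
  assert (Hp := sPI_pos).
  assert (H := ImpInt_anti (fun x => pdf x * ((K + x) + (mu - x) * Phi x - s^2 * pdf x)) 0
    Gout Gout (fun x => pdf x * ((K + x) + (mu - x) * Phi x - s^2 * pdf x))
     (fun x => pdf x * ((K + x) + (mu - x) * Phi x - s^2 * pdf x))).
  assert (HD : forall x, is_derive Gout x (pdf x * ((K + x) + (mu - x) * Phi x - s^2 * pdf x))).
  { intros x. unfold Gout. auto_derive. solve_ex. fixD. field. lra. }
  assert (HC : forall x, continuous (fun x => pdf x * ((K + x) + (mu - x) * Phi x - s^2 * pdf x)) x).
  { intros x. cont_tac. }
  eassert (HL1 : LM Gout _). { unfold Gout. limM. }
  eassert (HL2 : LP Gout _). { unfold Gout. limP. }
  specialize (H _ _ HC HD HC (fun _ _ => eq_refl) HD HC (fun _ _ => eq_refl) HL1 HL2).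
  match type of H with ImpInt _ ?v => replace (K + mu - s / sqrt PI) with v; auto end.
  unfold sq2. assert (E : sqrt PI * sqrt PI = PI) by (apply sqrt_sqrt; generalize PI_RGT_0; lra).
  set (q := sqrt PI) in *. rewrite <- E. field. lra.
Qed.
End Integ.

Lemma binom_low d n : 0 <= d -> INR n * (INR n - 1) / 2 * d ^ 2 <= (1 + d) ^ n.
Proof.
  intros Hd. assert (H : 1 + INR n * d + INR n * (INR n - 1) / 2 * d ^ 2 <= (1 + d) ^ n).
  { induction n. simpl. lra.
    rewrite S_INR. simpl pow.
    assert (0 <= INR n) by apply pos_INR.
    apply (Rle_trans _ ((1 + d) * (1 + INR n * d + INR n * (INR n - 1) / 2 * d ^ 2))).
    2: apply Rmult_le_compat_l; lra.
    assert (0 <= INR n * (INR n - 1) / 2 * d ^ 3 ).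
    { destruct n. simpl. lra. rewrite S_INR. assert (0 <= INR n) by apply pos_INR.
      apply Rmult_le_pos. apply Rmult_le_pos. apply Rmult_le_pos; lra. lra. apply pow_le; lra. }
    simpl in H0. nra. }
  assert (0 <= INR n) by apply pos_INR. nra.
Qed.

Lemma nq_lim q : 0 < q < 1 -> is_lim_seq (fun n => INR n * q ^ n) 0.
Proof.
  intros Hq. apply is_lim_seq_Reals. intros eps Heps.
  set (d := / q - 1).
  assert (Hd : 0 < d). { unfold d. assert (1 < / q). { rewrite <- Rinv_1. apply Rinv_lt_contravar; lra. } lra. }
  destruct (archimed (2 / (eps * d ^ 2))) as [Ha _].
  assert (Hz : (0 <= up (2 / (eps * d ^ 2)))%Z).
  { apply le_IZR. assert (0 < 2 / (eps * d^2)). { apply Rdiv_lt_0_compat. lra. apply Rmult_lt_0_compat. lra. apply pow_lt; lra. } lra. }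
  exists (S (S (Z.to_nat (up (2 / (eps * d ^ 2)))))).
  intros n Hn. unfold Rdist. rewrite Rminus_0_r.
  assert (Hn' : INR (Z.to_nat (up (2 / (eps * d ^ 2)))) + 2 <= INR n).
  { assert (H2: INR (Z.to_nat (up (2 / (eps * d ^ 2)))) + INR 2 <= INR n) by (rewrite <- plus_INR; apply le_INR; lia).
    change (INR 2) with (1 + 1) in H2. lra. }
  rewrite INR_IZR_INZ, Z2Nat.id in Hn' by auto.
  assert (Hq1 : q = / (1 + d)). { unfold d. replace (1 + (/ q - 1)) with (/ q) by ring. rewrite Rinv_inv. reflexivity. }
  assert (Hp : 0 < q ^ n) by (apply pow_lt; lra).
  rewrite Rabs_right by (apply Rle_ge, Rmult_le_pos; [apply pos_INR | lra]).
  assert (B := binom_low d n (Rlt_le _ _ Hd)).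
  assert (E : q ^ n * (1 + d) ^ n = 1). { rewrite <- Rpow_mult_distr. rewrite Hq1, Rinv_l. apply pow1. lra. }
  assert (Hd2 : 0 < d ^ 2) by (apply pow_lt; lra).
  assert (HA : 2 / (eps * d ^ 2) * (eps * d^2) = 2) by (field; lra).
  set (A := 2 / (eps * d ^ 2)) in *.
  assert (K1 : INR n * q ^ n * ((INR n - 1) / 2 * d ^ 2) <= 1).
  { apply (Rle_trans _ (q ^ n * (1 + d) ^ n)); [|lra]. replace (INR n * q ^ n * ((INR n - 1) / 2 * d ^ 2)) with (q^n * (INR n * (INR n - 1) / 2 * d ^ 2)) by field.
    apply Rmult_le_compat_l; lra. }
  assert (K2 : 1 < eps * ((INR n - 1) / 2 * d ^ 2)).
  { assert (A + 1 < INR n) by lra.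
    assert (eps * ((INR n - 1)/ 2 * d^2) > eps * (A / 2 * d^2)).
    { apply Rmult_gt_compat_l. lra. apply Rmult_gt_compat_r. lra. lra. }
    replace (eps * (A / 2 * d ^ 2)) with (A * (eps * d^2) / 2) in H0 by field. rewrite HA in H0. lra. }
  assert (0 < (INR n - 1) / 2 * d ^ 2) by nra.
  nra.
Qed.

Lemma geom_sum b c : 0 < b < 1 ->
  infinite_sum (fun k => geom_pmf b k * (INR (S k) + c)) (/ b + c).
Proof.
  intros Hb. set (q := 1 - b).
  assert (Hq : 0 < q < 1) by (unfold q; lra).
  assert (HS : forall n, sum_f_R0 (fun k => geom_pmf b k * (INR (S k) + c)) n =
     / b * (1 - q ^ S n - b * (INR (S n) * q ^ S n)) + c * (1 - q ^ S n)).
  { induction n.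
    - simpl. unfold geom_pmf, q. field. lra.
    - rewrite tech5, IHn. unfold geom_pmf. fold q.
      rewrite !S_INR. simpl pow. replace b with (1 - q) by (unfold q; ring).
      field. lra. }
  change (Un_cv (sum_f_R0 (fun k => geom_pmf b k * (INR (S k) + c))) (/ b + c)).
  apply is_lim_seq_Reals.
  apply is_lim_seq_ext with (fun n => / b * (1 - q ^ S n - b * (INR (S n) * q ^ S n)) + c * (1 - q ^ S n)).
  { intros; symmetry; apply HS. }
  assert (L1 : is_lim_seq (fun n => q ^ S n) 0).
  { apply (is_lim_seq_incr_1 (fun n => q ^ n)). apply is_lim_seq_geom. rewrite Rabs_right; lra. }
  assert (L2 : is_lim_seq (fun n => INR (S n) * q ^ S n) 0).
  { apply (is_lim_seq_incr_1 (fun n => INR n * q ^ n)). apply nq_lim; auto. }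
  replace (/ b + c) with (/ b * (1 - 0 - b * 0) + c * (1 - 0)) by ring.
  apply is_lim_seq_plus'. apply is_lim_seq_mult'. apply is_lim_seq_const.
  apply is_lim_seq_minus'. apply is_lim_seq_minus'. apply is_lim_seq_const. auto.
  apply is_lim_seq_mult'. apply is_lim_seq_const. auto.
  apply is_lim_seq_mult'. apply is_lim_seq_const. apply is_lim_seq_minus'. apply is_lim_seq_const. auto.
Qed.

Lemma Cpar_bounds M b : (2 <= M)%nat -> 0 < b < 1 -> 0 < Cpar M b < 1.
Proof.
  intros HM Hb. unfold Cpar. assert (H2 : 2 <= INR M) by (replace 2 with (INR 2) by (simpl; lra); apply le_INR; lia).
  split. apply Rdiv_lt_0_compat; lra.
  apply (Rmult_lt_reg_r (2 * INR M - 1)). lra. unfold Rdiv. rewrite Rmult_assoc, Rinv_l by lra. lra.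
Qed.

Lemma sigma0_pos M b : (2 <= M)%nat -> 0 < b < 1 -> 0 < sigma0 M b.
Proof.
  intros HM Hb. assert (HC := Cpar_bounds M b HM Hb).
  assert (H2 : 2 <= INR M) by (replace 2 with (INR 2) by (simpl; lra); apply le_INR; lia).
  unfold sigma0, mu0. apply sqrt_lt_R0. apply Rmult_lt_0_compat.
  apply Rdiv_lt_0_compat; lra.
  assert (1 < / Cpar M b). { rewrite <- Rinv_1. apply Rinv_lt_contravar; lra. } lra.
Qed.

Lemma part1 M b : (2 <= M)%nat -> 0 < b < 1 ->
  ExpZ0 M b (/ b + mu0 M b - sigma0 M b / sqrt PI).
Proof.
  intros HM Hb. assert (Hs := sigma0_pos M b HM Hb).
  set (mu := mu0 M b) in *. set (s := sigma0 M b) in *.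
  exists (fun k => INR (S k) + (mu - s / sqrt PI)). split.
  - intros k. exists (fun x => pdf mu s x * ((INR (S k) + x) + (mu - x) * Phi mu s x - s^2 * pdf mu s x)).
    split.
    + intros x. replace (INR (S k) + (mu - s / sqrt PI)) with (INR (S k) + mu - s / sqrt PI) by ring.
      apply (inner mu s (INR (S k)) Hs x).
    + replace (INR (S k) + (mu - s / sqrt PI)) with (INR (S k) + mu - s / sqrt PI) by ring.
      apply (outer mu s (INR (S k)) Hs).
  - replace (/ b + mu - s / sqrt PI) with (/ b + (mu - s / sqrt PI)) by ring.
    apply geom_sum; auto.
Qed.

Lemma lim_val u l l' : is_lim_seq u (Finite l) -> l = l' -> is_lim_seq u (Finite l').
Proof. intros; subst; auto. Qed.

Lemma asym (t a Rs : nat -> R) :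
  eventually (fun n => 0 < t n /\ 0 < a n /\ / t n + a n * t n <= Rs n) ->
  is_lim_seq a 2 -> is_lim_seq Rs (2 * sqrt 2) -> is_lim_seq t (sqrt 2 / 2).
Proof.
  intros Hev Ha HR.
  assert (H2 : 0 < sqrt 2) by (apply sqrt_lt_R0; lra).
  assert (Hsa : is_lim_seq (fun n => sqrt (a n)) (sqrt 2)).
  { apply is_lim_seq_continuous. apply continuity_pt_sqrt. lra. auto. }
  assert (Hrho : is_lim_seq (fun n => Rs n / sqrt (a n)) 2).
  { apply lim_val with (2 * sqrt 2 / sqrt 2). 2: field; lra.
    apply is_lim_seq_div'; auto. lra. }
  set (rho := fun n => Rs n / sqrt (a n)).
  assert (He : is_lim_seq (fun n => sqrt ((rho n - 2) * rho n)) 0).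
  { rewrite <- sqrt_0. apply is_lim_seq_continuous. apply continuity_pt_sqrt. lra.
    apply lim_val with ((2 - 2) * 2). 2: ring. apply is_lim_seq_mult'; auto.
    apply is_lim_seq_minus'; auto. apply is_lim_seq_const. }
  set (v := fun n => sqrt (a n) * t n).
  assert (Hv : is_lim_seq v 1).
  { apply is_lim_seq_le_le_loc with (fun n => 1 - sqrt ((rho n - 2) * rho n)) (fun n => 1 + sqrt ((rho n - 2) * rho n)).
    - destruct Hev as [N HN]. exists N. intros n Hn. destruct (HN n Hn) as [Ht [Han Hin]].
      assert (Hs : 0 < sqrt (a n)) by (apply sqrt_lt_R0; auto).
      assert (Es : sqrt (a n) * sqrt (a n) = a n) by (apply sqrt_sqrt; lra).
      assert (Hv0 : 0 < v n) by (unfold v; apply Rmult_lt_0_compat; auto).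
      assert (Hr : / v n + v n <= rho n).
      { unfold rho, v. apply (Rmult_le_reg_l (sqrt (a n))); auto.
        replace (sqrt (a n) * (Rs n / sqrt (a n))) with (Rs n) by (field; lra).
        replace (sqrt (a n) * (/ (sqrt (a n) * t n) + sqrt (a n) * t n)) with (/ t n + a n * t n)
          by (set (sa := sqrt (a n)) in *; rewrite <- Es; field; lra). auto. }
      assert (Hq : (v n - 1) ^ 2 <= (rho n - 2) * rho n).
      { assert (E1 : v n * (/ v n + v n) = 1 + v n ^ 2) by (field; lra).
        assert (1 + v n ^ 2 <= v n * rho n).
        { rewrite <- E1. apply Rmult_le_compat_l; lra. }
        assert (Hvr : v n <= rho n). { assert (0 < / v n) by (apply Rinv_0_lt_compat; auto). lra. }
        assert (2 <= rho n). { assert (v n * 2 <= v n * rho n).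
          { assert (Hc := H). replace (1 + v n ^ 2) with ((v n - 1)^2 + 2 * v n) in Hc by ring.
            assert (0 <= (v n-1)^2) by apply pow2_ge_0. lra. } apply Rmult_le_reg_l with (v n); auto. }
        nra. }
      assert (Hab : Rabs (v n - 1) <= sqrt ((rho n - 2) * rho n)).
      { rewrite <- sqrt_pow2 with (x := Rabs (v n - 1)) by apply Rabs_pos.
        apply sqrt_le_1_alt. rewrite pow2_abs. auto. }
      apply Rabs_le_between' in Hab. lra.
    - apply lim_val with (1 - 0). 2: ring.
      apply is_lim_seq_minus'. apply is_lim_seq_const. auto.
    - apply lim_val with (1 + 0). 2: ring.
      apply is_lim_seq_plus'. apply is_lim_seq_const. auto. }
  apply is_lim_seq_ext_loc with (fun n => v n / sqrt (a n)).
  { destruct Hev as [N HN]. exists N. intros n Hn. destruct (HN n Hn) as [Ht [Han Hin]].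
    assert (Hs : 0 < sqrt (a n)) by (apply sqrt_lt_R0; auto).
    unfold v. field. lra. }
  apply lim_val with (1 / sqrt 2).
  apply is_lim_seq_div'; auto. lra.
  assert (E : sqrt 2 * sqrt 2 = 2) by (apply sqrt_sqrt; lra).
  replace (sqrt 2 / 2) with (sqrt 2 / (sqrt 2 * sqrt 2)) by (rewrite E; reflexivity). field. lra.
Qed.

Definition Afn m := (m - 1) * (2 * m - 1).
Definition Pq := sqrt PI.
Definition Ff m b := / b + Afn m / (1 - b) - sqrt (Afn m * (2 * m - 2 + b)) / (1 - b) / Pq.

Lemma Pq_gt1 : 1 < Pq.
Proof. unfold Pq. rewrite <- sqrt_1. apply sqrt_lt_1_alt. generalize PI_RGT_0; split; [lra|].
  generalize (PI_ineq); intros. assert (H1 := PI2_1). lra. Qed.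

Lemma F_eq M b : (2 <= M)%nat -> 0 < b < 1 ->
  / b + mu0 M b - sigma0 M b / sqrt PI = Ff (INR M) b.
Proof.
  intros HM Hb. assert (H2 : 2 <= INR M) by (replace 2 with (INR 2) by (simpl; lra); apply le_INR; lia).
  unfold Ff, sigma0, mu0, Cpar, Afn, Pq. set (m := INR M) in *.
  assert (E1 : (m - 1) / ((1 - b) / (2 * m - 1)) = (m - 1) * (2 * m - 1) / (1 - b)) by (field; lra).
  rewrite E1. f_equal. f_equal.
  replace ((m - 1) * (2 * m - 1) / (1 - b) * (/ ((1 - b) / (2 * m - 1)) - 1)) with
    ((m - 1) * (2 * m - 1) * (2 * m - 2 + b) / ((1 - b) * (1 - b))) by (field; lra).
  rewrite sqrt_div_alt by nra. rewrite sqrt_square by lra. reflexivity.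
Qed.

Lemma sqrt_mono x y : 0 <= x <= y -> sqrt x <= sqrt y.
Proof. intros; apply sqrt_le_1_alt; lra. Qed.

Lemma key1 m b b0 : 2 <= m -> 0 < b < 1 -> 0 < b0 < 1 -> Ff m b <= Ff m b0 ->
  / b + (Afn m - sqrt (Afn m * (2 * m - 1)) / Pq) * b <=
  / b0 + Afn m * b0 / (1 - b0) + (sqrt (Afn m * (2 * m - 1)) / Pq - sqrt (Afn m * (2 * m - 2)) / Pq).
Proof.
  intros Hm Hb Hb0 HF. unfold Ff in HF.
  assert (HP := Pq_gt1).
  set (A := Afn m) in *.
  assert (HA : 2 * m - 1 <= A) by (unfold A, Afn; nra).
  set (S1 := sqrt (A * (2 * m - 1)) / Pq).
  set (s0 := sqrt (A * (2 * m - 2)) / Pq).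
  assert (HS1 : S1 < A).
  { unfold S1. assert (sqrt (A * (2 * m - 1)) <= A).
    { apply (Rle_trans _ (sqrt (A * A))). apply sqrt_mono. split; nra. rewrite sqrt_square; lra. }
    apply (Rmult_lt_reg_r Pq). lra.
    replace (sqrt (A * (2 * m - 1)) / Pq * Pq) with (sqrt (A * (2 * m - 1))) by (field; lra). nra. }
  assert (Hs0 : 0 <= s0). { unfold s0. apply Rmult_le_pos. apply sqrt_pos. left; apply Rinv_0_lt_compat; lra. }
  assert (L1 : sqrt (A * (2 * m - 2 + b)) / (1 - b) / Pq <= S1 / (1 - b)).
  { unfold S1. replace (sqrt (A * (2 * m - 2 + b)) / (1 - b) / Pq) with (sqrt (A * (2 * m - 2 + b)) * (/ (1 - b) * / Pq)) by (field; lra).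
    replace (sqrt (A * (2 * m - 1)) / Pq / (1 - b)) with (sqrt (A * (2 * m - 1)) * (/ (1 - b) * / Pq)) by (field; lra).
    apply Rmult_le_compat_r. left; apply Rmult_lt_0_compat; apply Rinv_0_lt_compat; lra.
    apply sqrt_mono. split; nra. }
  assert (U1 : s0 / (1 - b0) <= sqrt (A * (2 * m - 2 + b0)) / (1 - b0) / Pq).
  { unfold s0. replace (sqrt (A * (2 * m - 2 + b0)) / (1 - b0) / Pq) with (sqrt (A * (2 * m - 2 + b0)) * (/ (1 - b0) * / Pq)) by (field; lra).
    replace (sqrt (A * (2 * m - 2)) / Pq / (1 - b0)) with (sqrt (A * (2 * m - 2)) * (/ (1 - b0) * / Pq)) by (field; lra).
    apply Rmult_le_compat_r. left; apply Rmult_lt_0_compat; apply Rinv_0_lt_compat; lra.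
    apply sqrt_mono. split; nra. }
  assert (U2 : s0 <= s0 / (1 - b0)).
  { unfold Rdiv. rewrite <- (Rmult_1_r s0) at 1. apply Rmult_le_compat_l; auto.
    rewrite <- Rinv_1. apply Rinv_le_contravar; lra. }
  assert (L2 : (A - S1) * (1 + b) <= (A - S1) / (1 - b)).
  { unfold Rdiv. apply Rmult_le_compat_l. lra.
    apply (Rmult_le_reg_r (1 - b)). lra. rewrite Rinv_l by lra. nra. }
  assert (E1 : A / (1 - b) - S1 / (1 - b) = (A - S1) / (1 - b)) by (field; lra).
  assert (E2 : A / (1 - b0) = A + A * b0 / (1 - b0)) by (field; lra).
  lra.
Qed.

Definition cst := sqrt 2 / 2.
Definition aF m := (1 - / m) * (2 - / m) - sqrt ((1 - / m) * (2 - / m) ^ 2 * / m) / Pq.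
Definition RF m := / cst + (1 - / m) * (2 - / m) * cst / (1 - cst / m) + sqrt ((1 - / m) * / m) / Pq.

Lemma cst_bounds : 0 < cst < 1.
Proof. unfold cst. assert (0 < sqrt 2) by (apply sqrt_lt_R0; lra).
  assert (sqrt 2 < 2). { apply (Rlt_le_trans _ (sqrt (2 * 2))). apply sqrt_lt_1_alt. lra. rewrite sqrt_square; lra. } lra. Qed.

Lemma sqrt_diff x y : 0 <= y <= x -> 0 < x -> sqrt x - sqrt y <= (x - y) / sqrt x.
Proof.
  intros Hy Hx. assert (Hs : 0 < sqrt x) by (apply sqrt_lt_R0; auto).
  assert (Ex : sqrt x * sqrt x = x) by (apply sqrt_sqrt; lra).
  assert (Ey : sqrt y * sqrt y = y) by (apply sqrt_sqrt; lra).
  assert (Hyx : sqrt y <= sqrt x) by (apply sqrt_mono; lra).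
  assert (0 <= sqrt y) by apply sqrt_pos.
  apply (Rmult_le_reg_r (sqrt x)); auto.
  replace ((x - y) / sqrt x * sqrt x) with (x - y) by (field; lra). nra.
Qed.

Lemma div_lt x p : 1 < p -> 0 < x -> x / p < x.
Proof. intros; apply (Rmult_lt_reg_r p); [lra|]; replace (x/p*p) with x by (field; lra); nra. Qed.

Lemma key2 m b : 2 <= m -> 0 < b < 1 -> Ff m b <= Ff m (cst / m) ->
  0 < aF m /\ / (m * b) + aF m * (m * b) <= RF m.
Proof.
  intros Hm Hb HF. assert (Hc := cst_bounds). assert (HP := Pq_gt1).
  assert (Hb0 : 0 < cst / m < 1).
  { split. apply Rdiv_lt_0_compat; lra. apply (Rmult_lt_reg_r m). lra. unfold Rdiv. rewrite Rmult_assoc, Rinv_l; lra. }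
  assert (K := key1 m b (cst / m) Hm Hb Hb0 HF).
  set (A := Afn m) in *.
  assert (HA : 2 * m - 1 <= A) by (unfold A, Afn; nra).
  set (X1 := A * (2 * m - 1)) in *. set (X0 := A * (2 * m - 2)) in *.
  assert (HX1 : 0 < X1) by (unfold X1; nra).
  assert (Hs1 : 0 < sqrt X1) by (apply sqrt_lt_R0; auto).
  assert (EA : A / (m * m) = (1 - / m) * (2 - / m)) by (unfold A, Afn; field; lra).
  assert (ES1 : sqrt ((1 - / m) * (2 - / m) ^ 2 * / m) = sqrt X1 / (m * m)).
  { replace ((1 - / m) * (2 - / m) ^ 2 * / m) with (X1 / ((m * m) * (m * m))) by (unfold X1, A, Afn; field; lra).
    assert (0 < m * m) by nra.
    rewrite sqrt_div_alt by (apply Rmult_lt_0_compat; lra). rewrite sqrt_square by lra. reflexivity. }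
  assert (EA2 : A / (m * sqrt X1) = sqrt ((1 - / m) * / m)).
  { assert (0 < A / (m * sqrt X1)). { apply Rdiv_lt_0_compat. lra. nra. }
    rewrite <- (sqrt_square (A / (m * sqrt X1))) by lra. f_equal.
    assert (Ex : sqrt X1 * sqrt X1 = X1) by (apply sqrt_sqrt; lra).
    replace (A / (m * sqrt X1) * (A / (m * sqrt X1))) with (A * A / (m * m * (sqrt X1 * sqrt X1))) by (field; lra).
    rewrite Ex. unfold X1, A, Afn. field. lra. }
  assert (D : sqrt X1 - sqrt X0 <= A / sqrt X1).
  { assert (EX : X1 - X0 = A) by (unfold X1, X0; ring).
    apply (Rle_trans _ ((X1 - X0) / sqrt X1)). apply sqrt_diff; auto. unfold X0, X1; split; nra.
    rewrite EX; lra. }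
  split.
  - unfold aF. rewrite ES1, <- EA.
    assert (sqrt X1 <= A). { apply (Rle_trans _ (sqrt (A * A))). apply sqrt_mono. unfold X1; split; nra. rewrite sqrt_square; lra. }
    assert (sqrt X1 / (m * m) / Pq < sqrt X1 / (m * m)).
    { apply div_lt; auto. apply Rdiv_lt_0_compat; nra. }
    assert (sqrt X1 / (m * m) <= A / (m * m)). { unfold Rdiv; apply Rmult_le_compat_r. left; apply Rinv_0_lt_compat; nra. auto. }
    lra.
  - apply (Rmult_le_compat_r (/ m)) in K. 2: left; apply Rinv_0_lt_compat; lra.
    unfold RF, aF. rewrite ES1, <- EA2, <- EA.
    assert (E1 : (/ b + (A - sqrt X1 / Pq) * b) * / m = / (m * b) + (A / (m * m) - sqrt X1 / (m * m) / Pq) * (m * b)) by (field; lra).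
    assert (E2 : (/ (cst / m) + A * (cst / m) / (1 - cst / m) + (sqrt X1 / Pq - sqrt X0 / Pq)) * / m =
       / cst + A / (m * m) * cst / (1 - cst / m) + (sqrt X1 - sqrt X0) / m / Pq) by (field; lra).
    rewrite E1, E2 in K.
    assert ((sqrt X1 - sqrt X0) / m / Pq <= A / (m * sqrt X1) / Pq).
    { unfold Rdiv. apply Rmult_le_compat_r. left; apply Rinv_0_lt_compat; lra.
      replace (A * / (m * sqrt X1)) with (A / sqrt X1 * / m) by (field; lra).
      apply Rmult_le_compat_r. left; apply Rinv_0_lt_compat; lra. auto. }
    lra.
Qed.

Lemma Lu : is_lim_seq (fun n => / INR n) 0.
Proof.
  assert (H := is_lim_seq_inv INR p_infty is_lim_seq_INR).
  simpl in H. apply H. discriminate.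
Qed.

Lemma Lsqrt u (l : R) : is_lim_seq u l -> 0 <= l -> is_lim_seq (fun n => sqrt (u n)) (sqrt l).
Proof. intros; apply is_lim_seq_continuous. apply continuity_pt_sqrt; auto. auto. Qed.

Lemma aF_lim : is_lim_seq (fun n => aF (INR n)) 2.
Proof.
  unfold aF. assert (HP := Pq_gt1).
  apply lim_val with ((1 - 0) * (2 - 0) - sqrt ((1 - 0) * ((2 - 0) * (2 - 0)) * 0) / Pq).
  2: { rewrite !Rmult_0_r, sqrt_0. field. lra. }
  apply is_lim_seq_ext with (fun n => (1 - / INR n) * (2 - / INR n) - sqrt ((1 - / INR n) * ((2 - / INR n) * (2 - / INR n)) * / INR n) / Pq).
  { intros n. f_equal. f_equal. f_equal. f_equal. ring. }
  assert (L1 : is_lim_seq (fun n => 1 - / INR n) (1 - 0)) by (apply is_lim_seq_minus'; [apply is_lim_seq_const | apply Lu]).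
  assert (L2 : is_lim_seq (fun n => 2 - / INR n) (2 - 0)) by (apply is_lim_seq_minus'; [apply is_lim_seq_const | apply Lu]).
  apply is_lim_seq_minus'. apply is_lim_seq_mult'; auto.
  apply is_lim_seq_div'. apply Lsqrt. apply is_lim_seq_mult'. apply is_lim_seq_mult'; auto.
  apply is_lim_seq_mult'; auto. apply Lu. lra. apply is_lim_seq_const. lra.
Qed.

Lemma RF_lim : is_lim_seq (fun n => RF (INR n)) (2 * sqrt 2).
Proof.
  unfold RF. assert (HP := Pq_gt1). assert (Hc := cst_bounds).
  apply lim_val with (/ cst + (1 - 0) * (2 - 0) * cst / (1 - cst * 0) + sqrt ((1 - 0) * 0) / Pq).
  2: { rewrite !Rmult_0_r, sqrt_0. unfold cst. assert (E : sqrt 2 * sqrt 2 = 2) by (apply sqrt_sqrt; lra).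
       assert (0 < sqrt 2) by (apply sqrt_lt_R0; lra).
       set (r := sqrt 2) in *. replace (/ (r / 2)) with (2 / r) by (field; lra).
       replace (2 / r) with r by (rewrite <- E; field; lra). field. lra. }
  apply is_lim_seq_ext with (fun n => / cst + (1 - / INR n) * (2 - / INR n) * cst / (1 - cst * / INR n) + sqrt ((1 - / INR n) * / INR n) / Pq).
  { intros n. reflexivity. }
  assert (L1 : is_lim_seq (fun n => 1 - / INR n) (1 - 0)) by (apply is_lim_seq_minus'; [apply is_lim_seq_const | apply Lu]).
  assert (L2 : is_lim_seq (fun n => 2 - / INR n) (2 - 0)) by (apply is_lim_seq_minus'; [apply is_lim_seq_const | apply Lu]).
  apply is_lim_seq_plus'. apply is_lim_seq_plus'. apply is_lim_seq_const.
  apply is_lim_seq_div'. apply is_lim_seq_mult'. apply is_lim_seq_mult'; auto. apply is_lim_seq_const.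
  apply is_lim_seq_minus'. apply is_lim_seq_const. apply is_lim_seq_mult'. apply is_lim_seq_const. apply Lu.
  lra.
  apply is_lim_seq_div'. apply Lsqrt. apply is_lim_seq_mult'; auto. apply Lu. lra. apply is_lim_seq_const. lra.
Qed.

Lemma part2 (betastar : nat -> R) :
  (forall M : nat, (2 <= M)%nat ->
        0 < betastar M < 1 /\
        (forall beta L1 L2, 0 < beta < 1 ->
           ExpZ0 M (betastar M) L1 -> ExpZ0 M beta L2 -> L1 <= L2)) ->
  Un_cv (fun M => INR M * betastar M) (sqrt 2 / 2).
Proof.
  intros Hmin. apply is_lim_seq_Reals.
  apply (asym _ (fun n => aF (INR n)) (fun n => RF (INR n))).
  2: apply aF_lim. 2: apply RF_lim.
  exists 2%nat. intros M HM. destruct (Hmin M HM) as [Hb Hle].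
  assert (H2 : 2 <= INR M) by (replace 2 with (INR 2) by (simpl; lra); apply le_INR; lia).
  assert (Hc := cst_bounds).
  assert (Hb0 : 0 < cst / INR M < 1).
  { split. apply Rdiv_lt_0_compat; lra. apply (Rmult_lt_reg_r (INR M)). lra. unfold Rdiv. rewrite Rmult_assoc, Rinv_l; lra. }
  assert (HF := Hle _ _ _ Hb0 (part1 M (betastar M) HM Hb) (part1 M (cst / INR M) HM Hb0)).
  rewrite !F_eq in HF by auto.
  destruct (key2 (INR M) (betastar M) H2 Hb HF) as [Ha Hk].
  split. apply Rmult_lt_0_compat; lra. split; auto.
Qed.

Theorem mainTheorem5 :
  (forall (M : nat) (beta : R), (2 <= M)%nat -> 0 < beta < 1 ->
     ExpZ0 M beta (/ beta + mu0 M beta - sigma0 M beta / sqrt PI))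
  /\
  (forall betastar : nat -> R,
     (forall M : nat, (2 <= M)%nat ->
        0 < betastar M < 1 /\
        (forall beta L1 L2, 0 < beta < 1 ->
           ExpZ0 M (betastar M) L1 -> ExpZ0 M beta L2 -> L1 <= L2)) ->
     Un_cv (fun M => INR M * betastar M) (sqrt 2 / 2)).
Proof.
  split.
  - intros M beta HM Hb. apply part1; auto.
  - apply part2.
Qed.
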